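(* Let $\mathbf K$ be a commutative field, $p,q\in\mathbb N$, and let $\mathcal A\subset\mathbf K^{\mathcal M_{p\times q}}$ be a recursively closed vector space with finite saturation level $N$. Then $\mathcal A$ and $\mathcal A[\mathcal M_{p\times q}^{\le N}]$ are isomorphic. In particular $\mathcal A$ is finite-dimensional and contained in $\mathrm{Rec}_{p\times q}(\mathbf K)$.
   Context: For $p,q,l\in\mathbb N$, $\mathcal M_{p\times q}^l$ is the set of pairs $(U,W)$ of words of common length $l$ with $U\in\{0,\dots,p-1\}^l$, $W\in\{0,\dots,q-1\}^l$; $\mathcal M_{p\times q}=\bigcup_l\mathcal M_{p\times q}^l$ (a monoid under concatenation) and $\mathcal M_{p\times q}^{\le l}$ is the set of words of length at most $l$. $\mathbf K^{\mathcal M_{p\times q}}$ is the space of functions $\mathcal M_{p\times q}\to\mathbf K$, values written $A[U,W]$. Shift maps: $(\rho(S,T)A)[U,W]=A[US,WT]$. A subspace is recursively closed if it is invariant under all shift maps. For a subspace $\mathcal A$, $\mathcal A[\mathcal M_{p\times q}^{\le l}]$ denotes the image of $\mathcal A$ under restriction of functions to $\mathcal M_{p\times q}^{\le l}$. The saturation level of a non-zero subspace $\mathcal A$ is the smallest integer $N\ge0$ (if any) such that the natural projection $\mathcal A[\mathcal M_{p\times q}^{\le N+1}]\to\mathcal A[\mathcal M_{p\times q}^{\le N}]$ is an isomorphism; it is $\infty$ if no such $N$ exists, and the zero space has saturation level $-1$. $\mathrm{Rec}_{p\times q}(\mathbf K)$ is the set of $A$ whose linear span of $\{\rho(S,T)A\}$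 is finite-dimensional. *)

(* Defs.v *)
From HB Require Import structures.
From mathcomp Require Import all_boot all_order all_algebra.
Set Implicit Arguments. Unset Strict Implicit. Unset Printing Implicit Defensive.
Import GRing.Theory.
Local Open Scope ring_scope.

Definition Mpq (p q : nat) := {w : seq 'I_p * seq 'I_q | size w.1 == size w.2}.

Definition mlen p q (w : Mpq p q) : nat := size (sval w).1.

Lemma mcat_proof p q (w1 w2 : Mpq p q) :
  size ((sval w1).1 ++ (sval w2).1) == size ((sval w1).2 ++ (sval w2).2).
Proof.
case: w1 w2 => [[u1 v1] /= /eqP h1] [[u2 v2] /= /eqP h2].
by rewrite !size_cat h1 h2.
Qed.

Definition mcat p q (w1 w2 : Mpq p q) : Mpq p q :=
  exist _ ((sval w1).1 ++ (sval w2).1, (sval w1).2 ++ (sval w2).2) (mcat_proof w1 w2).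

Definition rho (K : fieldType) p q (st : Mpq p q) (A : Mpq p q -> K) : Mpq p q -> K :=
  fun uw => A (mcat uw st).

Definition is_subspace (K : fieldType) p q (A : (Mpq p q -> K) -> Prop) : Prop :=
  [/\ A (fun _ => 0),
      (forall f g, A f -> A g -> A (fun x => f x + g x)) &
      (forall (c : K) f, A f -> A (fun x => c * f x))].

Definition recursively_closed (K : fieldType) p q (A : (Mpq p q -> K) -> Prop) : Prop :=
  forall st f, A f -> A (rho st f).

Definition lin_comb (K : fieldType) p q (s : seq (Mpq p q -> K))
  (c : 'I_(size s) -> K) : Mpq p q -> K :=
  fun x => \sum_(i < size s) c i * nth (fun _ => 0) s i x.
Arguments lin_comb {K p q} s c _.

Definition spanned_by (K : fieldType) p q (s : seq (Mpq p q -> K))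
  (P : (Mpq p q -> K) -> Prop) : Prop :=
  forall f, P f -> exists c, f = lin_comb s c.

Definition finite_dim (K : fieldType) p q (A : (Mpq p q -> K) -> Prop) : Prop :=
  exists s : seq (Mpq p q -> K), (forall i : 'I_(size s), A (nth (fun _ => 0) s i)) /\ spanned_by s A.

(* Rec_{p x q}(K): the linear span of {rho(S,T) f} is finite-dimensional,
   i.e. contained in the span of a finite family. *)
Definition Rec (K : fieldType) p q (f : Mpq p q -> K) : Prop :=
  exists s : seq (Mpq p q -> K), spanned_by s (fun g => exists st, g = rho st f).

Definition agree_upto (K : fieldType) p q (l : nat) (f g : Mpq p q -> K) : Prop :=
  forall w, (mlen w <= l)%N -> f w = g w.

(* The natural projection A[M^{<= l+1}] -> A[M^{<= l}] is an isomorphism.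
   It is always surjective; injectivity means: two elements of A agreeing
   on M^{<= l} agree on M^{<= l+1}. *)
Definition proj_iso (K : fieldType) p q (A : (Mpq p q -> K) -> Prop) (l : nat) : Prop :=
  (forall f g, A f -> A g -> agree_upto l f g -> agree_upto l.+1 f g) /\
  (forall f, A f -> exists g, A g /\ agree_upto l g f).

Definition saturation_level (K : fieldType) p q (A : (Mpq p q -> K) -> Prop) (N : nat) : Prop :=
  [/\ exists f, A f /\ exists w, f w != 0,
      proj_iso A N &
      forall l, (l < N)%N -> ~ proj_iso A l].

(* Main.v *)
Require Import Defs.
From mathcomp Require Import all_boot all_order all_algebra.
From Stdlib Require Import Classical FunctionalExtensionality.
Set Implicit Arguments. Unset Strict Implicit. Unset Printing Implicit Defensive.
Import GRing.Theory.
Local Open Scope ring_scope.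


Lemma mlen_mcat p q (a b : Mpq p q) : mlen (mcat a b) = (mlen a + mlen b)%N.
Proof. by rewrite /mlen /mcat /= size_cat. Qed.

Lemma mtake_proof p q k (w : Mpq p q) :
  size (take k (sval w).1) == size (take k (sval w).2).
Proof. by case: w => [[u v] /= /eqP h]; rewrite !size_take h. Qed.
Lemma mdrop_proof p q k (w : Mpq p q) :
  size (drop k (sval w).1) == size (drop k (sval w).2).
Proof. by case: w => [[u v] /= /eqP h]; rewrite !size_drop h. Qed.
Definition mtake p q k (w : Mpq p q) : Mpq p q := exist _ (take k (sval w).1, take k (sval w).2) (mtake_proof k w).
Definition mdrop p q k (w : Mpq p q) : Mpq p q := exist _ (drop k (sval w).1, drop k (sval w).2) (mdrop_proof k w).

Lemma mcat_take_drop p q k (w : Mpq p q) : mcat (mtake k w) (mdrop k w) = w.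
Proof.
case: w => [[u v] h]; rewrite /mcat /=.
move: (mcat_proof _ _); rewrite !cat_take_drop => h'.
by rewrite (bool_irrelevance h' h).
Qed.

Lemma mlen_mtake p q k (w : Mpq p q) : mlen (mtake k w) = minn k (mlen w).
Proof. by rewrite /mlen /= size_take_min. Qed.
Lemma mlen_mdrop p q k (w : Mpq p q) : mlen (mdrop k w) = (mlen w - k)%N.
Proof. by rewrite /mlen /= size_drop. Qed.

Lemma vanish (K : fieldType) p q (A : (Mpq p q -> K) -> Prop) N :
  is_subspace A -> recursively_closed A -> proj_iso A N ->
  forall n h, A h -> (forall w, (mlen w <= N)%N -> h w = 0) ->
  forall w, (mlen w <= N + n)%N -> h w = 0.
Proof.
move=> [A0 _ _] Arc [Hpi _].
have step : forall h, A h -> (forall w, (mlen w <= N)%N -> h w = 0) ->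
   forall w, (mlen w <= N.+1)%N -> h w = 0.
  move=> h Ah hv w lw; exact: (Hpi h (fun _ => 0) Ah A0 hv w lw).
elim=> [|n IH] h Ah hv w lw; first by apply: hv; rewrite addn0 in lw.
have [lw1|lw1] := leqP (mlen w) N.+1; first exact: step.
set k := (mlen w).-1.
rewrite -(mcat_take_drop k w).
have hr : forall y, (mlen y <= N)%N -> rho (mdrop k w) h y = 0.
  move=> y ly; rewrite /rho; apply: step => //.
  rewrite mlen_mcat mlen_mdrop /k.
  have : (0 < mlen w)%N by apply: leq_ltn_trans lw1.
  case: (mlen w) => //= m _; rewrite subSn // subnn addn1 ltnS //.
apply: (IH _ (Arc _ _ Ah) hr (mtake k w)).
rewrite mlen_mtake /k; apply: leq_trans (geq_minl _ _) _.
rewrite /k -ltnS prednK; first by rewrite -addnS. by apply: leq_ltn_trans lw1.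
Qed.

Fixpoint all_up (T : finType) (n : nat) : seq (seq T) :=
  match n with
  | 0 => [:: [::]]
  | n.+1 => [::] :: [seq x :: s | x <- enum T, s <- all_up T n]
  end.

Lemma mem_all_up (T : finType) n (s : seq T) : (size s <= n)%N -> s \in all_up T n.
Proof.
elim: n s => [|n IH] [|x s] //= hs.
rewrite in_cons /=.
by apply: (allpairs_f (fun x s => x :: s)); [rewrite mem_enum | apply: IH].
Qed.

Definition words p q N : seq (Mpq p q) :=
  pmap insub [seq (u, v) | u <- all_up 'I_p N, v <- all_up 'I_q N].

Definition mempty p q : Mpq p q := exist _ ([::], [::]) (eqxx _).

Lemma words_cover p q N (w : Mpq p q) : (mlen w <= N)%N ->
  exists i : 'I_(size (words p q N)), nth (mempty p q) (words p q N) i = w.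
Proof.
move=> lw.
have wi : w \in words p q N.
  rewrite /words mem_pmap_sub.
  case: w lw => [[u v] h] /=; rewrite /mlen /= => lw.
  apply: (allpairs_f pair); apply: mem_all_up => //.
  by rewrite -(eqP h).
have hi : (index w (words p q N) < size (words p q N))%N by rewrite index_mem.
exists (Ordinal hi).
by rewrite /= nth_index.
Qed.

Definition rowf (K : fieldType) p q N (f : Mpq p q -> K) : 'rV[K]_(size (words p q N)) :=
  \row_j f (nth (mempty p q) (words p q N) j).

Definition mat (K : fieldType) p q N (s : seq (Mpq p q -> K)) :
  'M[K]_(size s, size (words p q N)) :=
  \matrix_(i, j) nth (fun _ => 0) s i (nth (mempty p q) (words p q N) j).

Lemma row_mat (K : fieldType) p q N (s : seq (Mpq p q -> K)) i :
  row i (mat N s) = rowf N (nth (fun _ => 0) s i).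
Proof. by apply/rowP => j; rewrite !mxE. Qed.

Lemma nth_sub_mat (K : fieldType) p q N (s : seq (Mpq p q -> K)) (i : 'I_(size s)) :
  (rowf N (nth (fun _ => 0) s i) <= mat N s)%MS.
Proof. by rewrite -row_mat row_sub. Qed.

Lemma mat_cons_sub (K : fieldType) p q N (f : Mpq p q -> K) s :
  (mat N s <= mat N (f :: s))%MS.
Proof.
apply/row_subP => i; rewrite row_mat.
have hi : (i.+1 < size (f :: s))%N by rewrite /= ltnS ltn_ord.
have := @nth_sub_mat K p q N (f :: s) (Ordinal hi); by [].
Qed.

Lemma head_sub_mat (K : fieldType) p q N (f : Mpq p q -> K) s :
  (rowf N f <= mat N (f :: s))%MS.
Proof.
have hi : (0 < size (f :: s))%N by [].
exact: (@nth_sub_mat K p q N (f :: s) (Ordinal hi)).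
Qed.

Lemma sum_in (K : fieldType) p q (A : (Mpq p q -> K) -> Prop) (I : Type) (r : seq I)
  (F : I -> Mpq p q -> K) :
  is_subspace A -> (forall i, A (F i)) -> A (fun x => \sum_(i <- r) F i x).
Proof.
move=> [A0 AD _] AF; elim: r => [|a r IH].
  by have -> : (fun x => \sum_(i <- [::]) F i x) = (fun _ => 0)
    by apply: functional_extensionality => x; rewrite big_nil.
have -> : (fun x => \sum_(i <- a :: r) F i x) = (fun x => F a x + \sum_(i <- r) F i x)
  by apply: functional_extensionality => x; rewrite big_cons.
exact: AD.
Qed.

Lemma lin_comb_in (K : fieldType) p q (A : (Mpq p q -> K) -> Prop) s c :
  is_subspace A -> (forall i : 'I_(size s), A (nth (fun _ => 0) s i)) ->
  A (lin_comb s c).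
Proof.
move=> As hs; rewrite /lin_comb.
apply: (@sum_in K p q A _ _ (fun i x => c i * nth (fun _ => 0) s i x)) => // i.
by case: As => _ _ AZ; apply: AZ.
Qed.

Lemma rowf_lin_comb (K : fieldType) p q N (s : seq (Mpq p q -> K)) (c : 'rV_(size s)) :
  rowf N (lin_comb s (fun i => c 0 i)) = c *m mat N s.
Proof.
apply/rowP => j; rewrite !mxE /lin_comb; apply: eq_bigr => i _.
by rewrite !mxE.
Qed.

Lemma find_basis (K : fieldType) p q N (A : (Mpq p q -> K) -> Prop) :
  exists s : seq (Mpq p q -> K), (forall i : 'I_(size s), A (nth (fun _ => 0) s i)) /\
    forall f, A f -> (rowf N f <= mat N s)%MS.
Proof.
apply: NNPP => H.
have H' : forall s : seq (Mpq p q -> K), (forall i : 'I_(size s), A (nth (fun _ => 0) s i)) ->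
   exists f, A f /\ ~~ (rowf N f <= mat N s)%MS.
  move=> s hs; apply: NNPP => H2; apply: H; exists s; split => // f Af.
  apply: NNPP => H3; apply: H2; exists f; split => //; exact/negP.
have : forall k, exists s : seq (Mpq p q -> K),
    (forall i : 'I_(size s), A (nth (fun _ => 0) s i)) /\ (k <= \rank (mat N s))%N.
  elim=> [|k [s [hs hk]]]; first by exists [::]; split => // -[].
  have [f [Af hf]] := H' s hs.
  exists (f :: s); split.
    case=> [[|i]] //= hi; have hi2 : (i < size s)%N by []; exact: (hs (Ordinal hi2)).
  apply: leq_ltn_trans hk _; apply: rank_ltmx; rewrite ltmxE mat_cons_sub /=.
  by apply: contra hf => h; apply: submx_trans (head_sub_mat N f s) h.
move=> /(_ (size (words p q N)).+1) [s [_ hk]].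
by have := leq_trans hk (rank_leq_col _); rewrite ltnn.
Qed.

Theorem mainTheorem4 (K : fieldType) (p q : nat) (A : (Mpq p q -> K) -> Prop) (N : nat) :
  is_subspace A -> recursively_closed A -> saturation_level A N ->
  (* the natural restriction A -> A[M^{<= N}] is an isomorphism:
     injective ... *)
  ((forall f g, A f -> A g -> agree_upto N f g -> f = g) /\
  (* ... (and surjective by definition of the image) *)
   (forall f, A f -> exists g, A g /\ agree_upto N g f)) /\
  finite_dim A /\
  (forall f, A f -> Rec f).
Proof.
move=> As Arc [_ Hpi _].
have inj : forall f g, A f -> A g -> agree_upto N f g -> f = g.
  move=> f g Af Ag hfg.
  have Ah : A (fun x => f x + (-1) * g x).
    by case: As => _ AD AZ; apply: AD => //; apply: AZ.
  have hz : forall y, (mlen y <= N)%N -> f y + (-1) * g y = 0.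
    by move=> y ly; rewrite hfg // mulN1r subrr.
  apply: functional_extensionality => w.
  have := @vanish K p q A N As Arc Hpi (mlen w) _ Ah hz w (leq_addl _ _).
  by rewrite mulN1r => /eqP; rewrite subr_eq0 => /eqP.
have fd : finite_dim A.
  have [s [hs hsub]] := find_basis N A.
  exists s; split => // f Af.
  have /submxP [c hc] := hsub f Af.
  exists (fun i => c 0 i); apply: inj => //; first exact: lin_comb_in.
  move=> w lw; have [i <-] := words_cover lw.
  have := congr1 (fun M : 'rV_(size (words p q N)) => M 0 i) hc.
  by rewrite -rowf_lin_comb /= !mxE.
split; first by split => //; case: Hpi.
split => // f Af.
have [s [_ hs]] := fd.
exists s => g [st ->]; apply: hs; exact: Arc.
Qed.
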